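(* Let $\mathit{VI}$ be a finite set of variables with $\#\mathit{VI}=n$ and $k\in\mathbb{N}$ with $1\le k\le n$. Then $\mathrm{dAtoms}(\mathit{TS}_k)=\{\,sh\in\mathrm{MI}(\mathit{TSD}_k)\mid \mathit{VI}\notin sh\,\}$.
   Context: $\mathit{SG}=\wp(\mathit{VI})\setminus\{\emptyset\}$, $\mathit{SH}=\wp(\mathit{SG})$ ordered by inclusion. $\mathrm{tuples}_k(S)=\{T\subseteq S\mid\#T=k\}$, $\mathrm{tuples}_k(sh)=\bigcup_{S'\in sh}\mathrm{tuples}_k(S')$, $\rho_{\mathit{TS}_k}(sh)=\{S\in\mathit{SG}\mid\mathrm{tuples}_k(S)\subseteq\mathrm{tuples}_k(sh)\}$, $\mathit{TS}_k=\rho_{\mathit{TS}_k}(\mathit{SH})$. $\rho_{\mathit{TSD}_k}(sh)=\{\,S\in\mathit{SG}\mid \forall T\subseteq S:\ \#T<k\implies S=\bigcup\{U\in sh\mid T\subseteq U\subseteq S\}\,\}$, $\mathit{TSD}_k=\rho_{\mathit{TSD}_k}(\mathit{SH})$. Both are complete lattices under inclusion with top $\mathit{SG}$. $\mathrm{MI}(C)$ denotes the meet-irreducible elements of a complete lattice $C$ ($x$ with $x=y\wedge z\Rightarrow x=y$ or $x=z$), and $\mathrm{dAtoms}(C)$ its dual-atoms ($x\ne\top$ with $x\le y<\top\Rightarrow x=y$). *)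

(* Defs.v *)
From mathcomp Require Import all_boot.
Set Implicit Arguments. Unset Strict Implicit. Unset Printing Implicit Defensive.

Section Sharing.
Variable VI : finType.

Definition SG : {set {set VI}} := [set S : {set VI} | S != set0].

Definition SH : {set {set {set VI}}} := powerset SG.

Definition tuples_set (k : nat) (S : {set VI}) : {set {set VI}} :=
  [set U in powerset S | #|U| == k].

Definition tuples_sh (k : nat) (sh : {set {set VI}}) : {set {set VI}} :=
  \bigcup_(S in sh) tuples_set k S.

Definition rho_TS (k : nat) (sh : {set {set VI}}) : {set {set VI}} :=
  [set S in SG | tuples_set k S \subset tuples_sh k sh].

Definition TS (k : nat) : {set {set {set VI}}} := [set rho_TS k sh | sh in SH].

Definition rho_TSD (k : nat) (sh : {set {set VI}}) : {set {set VI}} :=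
  [set S in SG | [forall T0 : {set VI},
      ((T0 \subset S) && (#|T0| < k)) ==>
      (S == \bigcup_(U in sh | (T0 \subset U) && (U \subset S)) U)]].

Definition TSD (k : nat) : {set {set {set VI}}} := [set rho_TSD k sh | sh in SH].

Definition is_meet_in (C : {set {set {set VI}}}) (x y z : {set {set VI}}) : bool :=
  [&& x \in C, x \subset y, x \subset z &
      [forall w in C, ((w \subset y) && (w \subset z)) ==> (w \subset x)]].

Definition MI (C : {set {set {set VI}}}) : {set {set {set VI}}} :=
  [set x in C | [forall y in C, forall z in C,
      is_meet_in C x y z ==> ((x == y) || (x == z))]].

Definition dAtoms (C : {set {set {set VI}}}) : {set {set {set VI}}} :=
  [set x in C | (x != SG) &&
      [forall y in C, ((x \subset y) && (y != SG)) ==> (x == y)]].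

End Sharing.

(* Main.v *)
Require Import Defs.
From mathcomp Require Import all_boot.
From mathcomp Require Import zify.
Set Implicit Arguments. Unset Strict Implicit. Unset Printing Implicit Defensive.

Section Proof.
Variable VI : finType.
Variable k : nat.
Hypothesis k_gt0 : 0 < k.
Hypothesis k_le : k <= #|VI|.

Definition XT (T : {set VI}) : {set {set VI}} := [set S in SG VI | ~~ (T \subset S)].
Definition upT (T : {set VI}) : {set {set VI}} := [set S in SG VI | T \subset S].

Lemma inSG (S : {set VI}) : (S \in SG VI) = (S != set0).
Proof. by rewrite in_set. Qed.
Lemma inXT (T S : {set VI}) : (S \in XT T) = (S \in SG VI) && ~~ (T \subset S).
Proof. by rewrite in_set. Qed.
Lemma inUp (T S : {set VI}) : (S \in upT T) = (S \in SG VI) && (T \subset S).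
Proof. by rewrite in_set. Qed.

Definition covers (sh : {set {set VI}}) (S : {set VI}) :=
  forall T0 : {set VI}, T0 \subset S -> #|T0| < k ->
  forall x, x \in S -> exists2 U, U \in sh & [/\ T0 \subset U, U \subset S & x \in U].

Lemma rhoTSDP (sh : {set {set VI}}) (S : {set VI}) : reflect (S \in SG VI /\ covers sh S) (S \in rho_TSD k sh).
Proof.
rewrite [in X in reflect _ X]/rho_TSD [in X in reflect _ X]in_set; apply: (iffP andP) => [[SG1 /forallP H]|[SG1 H]]; split=> //.
- move=> T0 sT0 cT0 x xS.
  have /eqP E := implyP (H T0) (introT andP (conj sT0 cT0)).
  move: xS; rewrite {1}E => /bigcupP [U /andP[Ush /andP[h1 h2]] xU].
  by exists U.
- apply/forallP=> T0; apply/implyP=> /andP[sT0 cT0]; rewrite eqEsubset; apply/andP; split.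
    apply/subsetP=> x xS; have [U Ush [h1 h2 xU]] := H T0 sT0 cT0 x xS.
    by apply/bigcupP; exists U => //; rewrite Ush h1 h2.
  by apply/bigcupsP=> U /andP[_ /andP[_ ->]].
Qed.

Lemma rho_sub (sh : {set {set VI}}) : rho_TSD k sh \subset SG VI.
Proof. by apply/subsetP=> S /rhoTSDP[]. Qed.

Lemma rho_ext (sh : {set {set VI}}) : sh \subset SG VI -> sh \subset rho_TSD k sh.
Proof.
move=> H; apply/subsetP=> S Ssh; apply/rhoTSDP; split; first exact: (subsetP H S Ssh).
by move=> T0 sT0 _ x xS; exists S.
Qed.

Lemma rho_idem (sh : {set {set VI}}) : rho_TSD k (rho_TSD k sh) \subset rho_TSD k sh.
Proof.
apply/subsetP=> S /rhoTSDP[SGS cov]; apply/rhoTSDP; split=> // T0 sT0 cT0 x xS.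
have [U /rhoTSDP[_ covU] [h1 h2 xU]] := cov T0 sT0 cT0 x xS.
have [V Vsh [g1 g2 xV]] := covU T0 h1 cT0 x xU.
by exists V => //; split=> //; exact: subset_trans g2 h2.
Qed.

Lemma rho_mono (sh1 sh2 : {set {set VI}}) : sh1 \subset sh2 -> rho_TSD k sh1 \subset rho_TSD k sh2.
Proof.
move=> H; apply/subsetP=> S /rhoTSDP[SGS cov]; apply/rhoTSDP; split => // T0 sT0 cT0 x xS.
have [U U1 rest] := cov T0 sT0 cT0 x xS; exists U => //; exact: subsetP H U U1.
Qed.

Lemma TSD_sub (y : {set {set VI}}) : y \in TSD VI k -> y \subset SG VI.
Proof. by case/imsetP => sh _ ->; apply: rho_sub. Qed.

Lemma TSD_fix (y : {set {set VI}}) : y \in TSD VI k -> rho_TSD k y = y.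
Proof.
case/imsetP=> sh _ ->; apply/eqP; rewrite eqEsubset rho_idem rho_ext //.
exact: rho_sub.
Qed.

Lemma rho_in (sh : {set {set VI}}) : sh \subset SG VI -> rho_TSD k sh \in TSD VI k.
Proof. by move=> H; apply/imsetP; exists sh => //; rewrite /SH powersetE. Qed.

Lemma fix_TSD (x : {set {set VI}}) : rho_TSD k x = x -> x \in TSD VI k.
Proof. move=> E; rewrite -E; apply: rho_in; rewrite -E; exact: rho_sub. Qed.

Lemma T_SG (T : {set VI}) : #|T| = k -> T \in SG VI.
Proof. by move=> cT; rewrite inSG -card_gt0 cT. Qed.

Lemma XT_fix (T : {set VI}) : #|T| = k -> rho_TSD k (XT T) = XT T.
Proof.
move=> cT; apply/eqP; rewrite eqEsubset; apply/andP; split; last first.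
  by apply: rho_ext; apply/subsetP=> S; rewrite inXT => /andP[].
apply/subsetP=> S /rhoTSDP [SGS cov]; rewrite inXT SGS /=; apply/negP => TS.
have [t tT] : exists t, t \in T.
  by apply/set0Pn; rewrite -card_gt0 cT.
have cD : #|T :\ t| < k by move: (cardsD1 t T); rewrite tT cT; lia.
have [U] := cov (T :\ t) (subset_trans (subD1set T t) TS) cD t (subsetP TS t tT).
rewrite inXT => /andP[_ nTU] [h1 _ tU]; apply: (negP nTU).
apply/subsetP=> y yT; case: (y =P t) => [->//|/eqP ne]; apply: (subsetP h1).
by rewrite in_setD1 ne yT.
Qed.

Lemma XT_TSD (T : {set VI}) : #|T| = k -> XT T \in TSD VI k.
Proof. by move=> cT; apply: fix_TSD; apply: XT_fix. Qed.

Lemma VI_in (T S : {set VI}) (y : {set {set VI}}) : #|T| = k -> XT T \subset y -> S \in y -> T \subset S ->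
  rho_TSD k y = y -> setT \in y.
Proof.
move=> cT sub Sy TS fy; rewrite -fy; apply/rhoTSDP; split.
  by rewrite inSG -card_gt0 cardsT; apply: leq_trans k_gt0 k_le.
move=> T0 _ cT0 x _.
case: (boolP (T \subset x |: T0)) => hT.
- have E : x |: T0 = T.
    apply/eqP; rewrite eq_sym eqEcard hT /= cT.
    by move: (cardsU1 x T0); lia.
  exists S => //; split; last by apply: (subsetP TS); rewrite -E setU11.
    by apply: subset_trans TS; rewrite -E subsetUr.
  exact: subsetT.
- exists (x |: T0); last by split; [exact: subsetUr | exact: subsetT | exact: setU11].
  apply: (subsetP sub); rewrite inXT hT andbT inSG; apply/set0Pn; exists x; exact: setU11.
Qed.

Lemma XT_MI (T : {set VI}) : #|T| = k -> XT T \in MI (TSD VI k).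
Proof.
move=> cT; rewrite in_set XT_TSD //=.
apply/forallP=> y; apply/implyP=> yin; apply/forallP=> z; apply/implyP=> zin.
apply/implyP => /and4P[_ sy sz /forallP mx].
case: (altP (XT T =P y)) => //= ny; case: (altP (XT T =P z)) => //= nz.
have /subsetPn [S Sy SnX] : ~~ (y \subset XT T)
  by apply: contra ny => h; rewrite eqEsubset sy h.
have /subsetPn [S' Sz SnX'] : ~~ (z \subset XT T)
  by apply: contra nz => h; rewrite eqEsubset sz h.
rewrite inXT (subsetP (TSD_sub yin) S Sy) /= negbK in SnX.
rewrite inXT (subsetP (TSD_sub zin) S' Sz) /= negbK in SnX'.
have Vy := VI_in cT sy Sy SnX (TSD_fix yin).
have Vz := VI_in cT sz Sz SnX' (TSD_fix zin).
have yzSG : y :&: z \subset SG VI.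
  exact: subset_trans (subsetIl y z) (TSD_sub yin).
have := mx (rho_TSD k (y :&: z)); rewrite rho_in //=.
have -> : rho_TSD k (y :&: z) \subset y.
  by rewrite -{2}(TSD_fix yin); apply: rho_mono; apply: subsetIl.
have -> : rho_TSD k (y :&: z) \subset z.
  by rewrite -{2}(TSD_fix zin); apply: rho_mono; apply: subsetIr.
move=> /= /subsetP /(_ setT).
have -> : setT \in rho_TSD k (y :&: z) by apply: (subsetP (rho_ext yzSG)); rewrite in_setI Vy Vz.
move=> /(_ isT); by rewrite inXT subsetT andbF.
Qed.

Lemma exists_ext (B : {set VI}) : #|B| <= k -> exists T : {set VI}, B \subset T /\ #|T| = k.
Proof.
move: {2}(k - #|B|) (erefl (k - #|B|)) => m; elim: m B => [|m IH] B E hB.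
  by exists B; split => //; lia.
have /subsetPn [x _ xnB] : ~~ (setT \subset B).
  apply/negP => h; have := subset_leq_card h; rewrite cardsT; lia.
have cU := cardsU1 x B; rewrite xnB /= in cU.
have [T [sT cT]] := IH (x |: B) ltac:(lia) ltac:(lia).
by exists T; split => //; apply: subset_trans sT; apply: subsetUr.
Qed.

Lemma MI_XT (M : {set {set VI}}) : M \in MI (TSD VI k) -> setT \notin M -> exists2 T : {set VI}, #|T| = k & M = XT T.
Proof.
rewrite in_set => /andP[Min /forallP mi] nVI.
have fM := TSD_fix Min.
have : setT \notin rho_TSD k M by rewrite fM.
rewrite in_set inSG.
have -> : (setT : {set VI}) != set0 by rewrite -card_gt0 cardsT; apply: leq_trans k_gt0 k_le.
move=> /= /forallPn [T0]; rewrite negb_imply => /andP[/andP[_ cT0] neq].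
have /subsetPn [v _ vn] : ~~ (setT \subset
      \bigcup_(U in M | (T0 \subset U) && (U \subset setT)) U).
  by apply: contra neq => h; rewrite eqEsubset h subsetT.
have [T [BT cT]] : exists T : {set VI}, v |: T0 \subset T /\ #|T| = k.
  by apply: exists_ext; move: (cardsU1 v T0); lia.
have MX : M \subset XT T.
  apply/subsetP=> U UM; rewrite inXT (subsetP (TSD_sub Min) U UM) /=.
  apply/negP=> TU; apply: (negP vn); apply/bigcupP; exists U.
    rewrite UM subsetT andbT /=.
    by apply: subset_trans TU; apply: subset_trans BT; apply: subsetUr.
  by apply: (subsetP TU); apply: (subsetP BT); apply: setU11.
exists T => //.
have TnM : T \notin M.
  by apply/negP=> TM; have := subsetP MX T TM; rewrite inXT subxx andbF.
have Tz : T \in M :|: upT T by rewrite in_setU inUp T_SG // subxx orbT.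
have zfix : rho_TSD k (M :|: upT T) = M :|: upT T.
  apply/eqP; rewrite eqEsubset; apply/andP; split; last first.
    apply: rho_ext; rewrite subUset TSD_sub //=.
    by apply/subsetP=> S; rewrite inUp => /andP[].
  apply/subsetP=> S /rhoTSDP[SGS cov].
  case: (boolP (T \subset S)) => TS.
    by rewrite in_setU inUp SGS TS orbT.
  rewrite in_setU; apply/orP; left; rewrite -fM; apply/rhoTSDP; split=> //.
  move=> T0' sT0 cT0' x xS; have [U Uz [h1 h2 xU]] := cov T0' sT0 cT0' x xS.
  exists U => //; move: Uz; rewrite in_setU inUp => /orP[//|/andP[_ TU]].
  by rewrite (subset_trans TU h2) in TS.
have zin : M :|: upT T \in TSD VI k by apply: fix_TSD.
have /implyP/(_ (XT_TSD cT))/forallP/(_ (M :|: upT T))/implyP/(_ zin)/implyP H := mi (XT T).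
have : is_meet_in (TSD VI k) M (XT T) (M :|: upT T).
  apply/and4P; split=> //; first exact: subsetUl.
  apply/forallP=> w; apply/implyP=> _; apply/implyP => /andP[wX wz].
  apply/subsetP=> S Sw; have := subsetP wz S Sw; rewrite in_setU => /orP[//|].
  rewrite inUp => /andP[_ TS]; have := subsetP wX S Sw.
  by rewrite inXT TS andbF.
move/H => /orP[/eqP //|/eqP E].
by rewrite -E in Tz; rewrite Tz in TnM.
Qed.

Lemma XT_TS (T : {set VI}) : #|T| = k -> XT T \in TS VI k.
Proof.
move=> cT; apply/imsetP; exists (XT T).
  by rewrite /SH powersetE; apply/subsetP=> S; rewrite inXT => /andP[].
apply/setP=> S; rewrite /rho_TS in_set inXT.
case SGS: (S \in SG VI) => //=.
case: (boolP (T \subset S)) => TS /=.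
- symmetry; apply/negP => H.
  have : T \in tuples_set k S by rewrite in_set powersetE TS cT eqxx.
  move/(subsetP H) => /bigcupP [U UX]; rewrite in_set powersetE => /andP[TU _].
  by move: UX; rewrite inXT TU andbF.
- symmetry; apply: (bigcup_sup S); by rewrite inXT SGS TS.
Qed.

Lemma TS_XT (y : {set {set VI}}) : y \in TS VI k -> y != SG VI -> exists2 T : {set VI}, #|T| = k & y \subset XT T.
Proof.
case/imsetP=> sh _ -> ne.
have /subsetPn [S SG1 Sn] : ~~ (SG VI \subset rho_TS k sh).
  apply: contra ne => h; rewrite eqEsubset h andbT.
  by apply/subsetP=> S; rewrite in_set => /andP[].
rewrite in_set SG1 /= in Sn.
case/subsetPn: Sn => T; rewrite in_set powersetE => /andP[TS /eqP cT] Tn.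
exists T => //; apply/subsetP => S' S'in.
move: S'in; rewrite in_set => /andP[SG' sub]; rewrite inXT SG' /=.
apply/negP=> TS'; apply: (negP Tn); apply: (subsetP sub).
by rewrite in_set powersetE TS' cT eqxx.
Qed.

Lemma XT_neq (T : {set VI}) : #|T| = k -> XT T != SG VI.
Proof.
move=> cT; apply/eqP => E; have : T \in XT T by rewrite E T_SG.
by rewrite inXT subxx andbF.
Qed.

Lemma main : dAtoms (TS VI k) = [set sh in MI (TSD VI k) | [set: VI] \notin sh].
Proof.
apply/setP=> x; rewrite /dAtoms in_set [in RHS]in_set; apply/idP/idP.
- move/andP=>[xTS /andP[ne /forallP mx]].
  have [T cT sub] := TS_XT xTS ne.
  have /eqP -> := implyP (implyP (mx (XT T)) (XT_TS cT)) (introT andP (conj sub (XT_neq cT))).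
  by rewrite (XT_MI cT) inXT subsetT andbF.
- move/andP=>[xMI nT]; have [T cT ->] := MI_XT xMI nT.
  rewrite XT_TS //= XT_neq //=.
  apply/forallP=> y; apply/implyP=> yTS; apply/implyP=> /andP[sub ne].
  have [T' cT' sub'] := TS_XT yTS ne.
  have TT' : T = T'.
    apply/eqP; rewrite eqEcard cT cT' leqnn andbT.
    case: (boolP (T \subset T')) => // nTT'.
    have : T' \in XT T'.
      by apply: (subsetP sub'); apply: (subsetP sub); rewrite inXT nTT' andbT T_SG.
    by rewrite inXT subxx andbF.
  by subst; rewrite eqEsubset sub sub'.
Qed.

End Proof.

Theorem corollary4p4 (VI : finType) (n k : nat) :
  #|VI| = n -> 1 <= k <= n ->
  dAtoms (TS VI k) = [set sh in MI (TSD VI k) | [set: VI] \notin sh].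
Proof.
move=> cV /andP[k1 kn]; apply: main => //; by rewrite cV.
Qed.
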